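(* Let $r\in\mathbb{N}$ and let $p\in(\frac{1}{r+1},\frac1r]$ be fixed. Let $(H_n)_{n\in\mathbb{N}}$ be a sequence of weakly $q$-pseudorandom graphs on $n$ vertices with $q=q(n)\gg\log(n)/n$. Then the following hold for $H=H_n$: (i) For every $\mu\in\mathcal{M}_{1,p}(H)$, with probability $1-o(1)$ we have $|C_1(\mathbf{H}_\mu)|\geq(1-o(1))\frac{1+\sqrt{\frac{(r+1)p-1}{r}}}{r+1}\,n$. (ii) There exists $\mu\in\mathcal{M}_{1,p}(H)$ such that with probability $1-o(1)$ the random graph $\mathbf{H}_\mu$ satisfies $|C_1(\mathbf{H}_\mu)|\leq(1+o(1))\frac{1+\sqrt{\frac{(r+1)p-1}{r}}}{r+1}\,n$.
   Context: A sequence $(H_n)$ of $n$-vertex graphs is weakly $q$-pseudorandom if $\max\{|e(H_n[U])-q|U|^2/2|:\ U\subseteq V(H_n)\}=o(qn^2)$. A random graph model on $H$ is a probability measure $\mu$ on subsets of $E(H)$, and $\mathbf{H}_\mu$ is the random spanning subgraph of $H$ with edge set distributed according to $\mu$. $\mu$ is $1$-independent if for all sets $A,B\subseteq E(H)$ whose edges span disjoint vertex sets, $E(\mathbf{H}_\mu)\cap A$ and $E(\mathbf{H}_\mu)\cap B$ are independent. $\mathcal{M}_{1,p}(H)$ is the set of $1$-independent measures on $H$ in which each edge is present with probability exactly $p$. $C_1(\mathbf{H}_\mu)$ denotes a largest connected component of $\mathbf{H}_\mu$. Asymptotics are as $n\to\infty$. *)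

(* Defs.v *)
From HB Require Import structures.
From mathcomp Require Import all_boot all_order all_algebra.
From mathcomp Require Import reals exp.
Set Implicit Arguments. Unset Strict Implicit. Unset Printing Implicit Defensive.
Import Order.TTheory GRing.Theory Num.Theory.
Local Open Scope ring_scope.

Section Defs.
Variable R : realType.

(* A simple graph on vertex set 'I_n is given by its edge set: a set of
   2-element subsets of 'I_n. *)
Definition is_simple_graph n (E : {set {set 'I_n}}) : Prop :=
  forall e, e \in E -> #|e| = 2%N.

Definition edges_in n (E : {set {set 'I_n}}) (U : {set 'I_n}) : nat :=
  #|[set e in E | e \subset U]|.

Definition weakly_pseudorandom (H : forall n, {set {set 'I_n}}) (q : nat -> R) : Prop :=
  forall eps : R, 0 < eps -> exists N : nat, forall n : nat, (N <= n)%N ->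
    forall U : {set 'I_n},
      `| (edges_in (H n) U)%:R - q n * (#|U|%:R) ^+ 2 / 2 | <= eps * (q n * (n%:R) ^+ 2).

Definition prob n (mu : {ffun {set {set 'I_n}} -> R}) (A : pred {set {set 'I_n}}) : R :=
  \sum_(S | A S) mu S.

Definition random_graph_model n (E : {set {set 'I_n}}) (mu : {ffun {set {set 'I_n}} -> R}) : Prop :=
  [/\ forall S, 0 <= mu S, \sum_S mu S = 1 & forall S, mu S != 0 -> S \subset E].

Definition span n (A : {set {set 'I_n}}) : {set 'I_n} := \bigcup_(e in A) e.

Definition one_independent n (E : {set {set 'I_n}}) (mu : {ffun {set {set 'I_n}} -> R}) : Prop :=
  forall A B : {set {set 'I_n}}, A \subset E -> B \subset E ->
    [disjoint span A & span B] ->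
    forall a b : {set {set 'I_n}},
      prob mu (fun S => (S :&: A == a) && (S :&: B == b))
      = prob mu (fun S => S :&: A == a) * prob mu (fun S => S :&: B == b).

Definition M1p n (E : {set {set 'I_n}}) (p : R) (mu : {ffun {set {set 'I_n}} -> R}) : Prop :=
  [/\ random_graph_model E mu, one_independent E mu &
      forall e, e \in E -> prob mu (fun S => e \in S) = p].

Definition component n (S : {set {set 'I_n}}) (v : 'I_n) : {set 'I_n} :=
  [set u | connect (fun x y => [set x; y] \in S) v u].

Definition largest_component_size n (S : {set {set 'I_n}}) : nat :=
  \max_(v : 'I_n) #|component S v|.

End Defs.

(* Main.v *)
Require Import Defs.
From HB Require Import structures.
From mathcomp Require Import all_boot all_order all_algebra.
From mathcomp Require Import reals exp.
From mathcomp Require Import lra zify ring.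
Import Order.TTheory GRing.Theory Num.Theory.
Local Open Scope ring_scope.

Set Implicit Arguments. Unset Strict Implicit. Unset Printing Implicit Defensive.

Section Gen.
Variable R : realType.
Variable T : finType.
Variable w : T -> R.
Hypothesis w0 : forall x, 0 <= w x.

Lemma sum_sub_le (P : pred T) (F : T -> R) : (forall x, 0 <= F x) ->
  \sum_(x | P x) F x <= \sum_x F x.
Proof.
move=> F0; rewrite [X in _ <= X](bigID P) /= lerDl.
by apply: sumr_ge0 => x _.
Qed.

Lemma cheb (X : T -> R) m t : 0 < t ->
  \sum_(x | t <= `|X x - m|) w x <= (\sum_x w x * (X x - m)^+2) / t^+2.
Proof.
move=> t0; have t20 : 0 < t ^+ 2 by rewrite exprn_gt0.
rewrite ler_pdivlMr // big_distrl /=.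
apply: (@le_trans _ _ (\sum_(x | t <= `|X x - m|) w x * (X x - m)^+2)).
  apply: ler_sum => x Hx; apply: ler_wpM2l => //.
  rewrite -[(X x - m)^+2]real_normK ?num_real //.
  have := ltW t0; move: Hx; set y := `|_|; clearbody y; move=> Hy Ht; rewrite !expr2.
  exact: ler_pM.
apply: (sum_sub_le (fun x => t <= `|X x - m|)).
by move=> x; apply: mulr_ge0 => //; apply: sqr_ge0.
Qed.

Lemma sum_compl (P : pred T) : \sum_x w x = 1 ->
  \sum_(x | P x) w x = 1 - \sum_(x | ~~ P x) w x.
Proof. by move=> w1; rewrite -w1 [X in _ = X - _](bigID P) /= addrK. Qed.

Lemma sum_mono (P Q : pred T) : (forall x, P x -> Q x) ->
  \sum_(x | P x) w x <= \sum_(x | Q x) w x.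
Proof.
move=> PQ; rewrite [X in _ <= X](bigID P) /=.
have -> : \sum_(i | Q i && P i) w i = \sum_(i | P i) w i.
  by apply: eq_bigl => x; case Px: (P x); rewrite ?andbT ?andbF ?PQ.
by rewrite lerDl; apply: sumr_ge0.
Qed.

End Gen.

Section SqBound.
Variable R : realType.

Lemma sq_bound (I : finType) (P : pred I) (x : I -> R) (r : nat) (T N : R) :
  (forall i, P i -> 0 <= x i) -> (forall i, P i -> x i <= T) ->
  \sum_(i | P i) x i <= N -> 0 <= N - r%:R * T -> N - r%:R * T <= T ->
  \sum_(i | P i) x i ^+ 2 <= r%:R * T^+2 + (N - r%:R * T)^+2.
Proof.
move=> x0 xT sN b0 bT.
set b := N - r%:R * T in b0 bT *.
have T0 : 0 <= T by apply: le_trans bT.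
pose J := fun i => b <= x i.
set s := \sum_(i | P i && J i) x i.
set s' := \sum_(i | P i && ~~ J i) x i.
set kn := (\sum_(i | P i && J i) 1)%N.
have step : \sum_(i | P i) x i ^+ 2 <=
    \sum_(i | P i && J i) ((T + b) * x i - T * b) + \sum_(i | P i && ~~ J i) (b * x i).
  rewrite (bigID J) /=; apply: lerD; apply: ler_sum => i /andP[Pi Ji].
    have := x0 i Pi; have := xT i Pi; rewrite /J in Ji; move: (x i) Ji => y Hy H1 H2.
    rewrite expr2; nra.
  have := x0 i Pi; rewrite /J -ltNge in Ji; move: (x i) Ji => y Hy H2.
  rewrite expr2; nra.
have e1 : \sum_(i | P i && J i) ((T + b) * x i - T * b) = (T + b) * s - T * b * kn%:R.
  rewrite sumrB -big_distrr /= natr_sum; congr (_ - _).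
  by rewrite big_distrr /=; apply: eq_bigr => i _; rewrite mulr1.
have e2 : \sum_(i | P i && ~~ J i) (b * x i) = b * s' by rewrite -big_distrr.
rewrite e1 e2 in step.
have s0 : 0 <= s by apply: sumr_ge0 => i /andP[Pi _]; apply: x0.
have s'0 : 0 <= s' by apply: sumr_ge0 => i /andP[Pi _]; apply: x0.
have ss' : s + s' <= N by rewrite /s /s' -(bigID J) /=.
have sk : s <= T * kn%:R.
  rewrite natr_sum big_distrr /=; apply: ler_sum => i /andP[Pi _]; rewrite mulr1; exact: xT.
have Nb : N = b + r%:R * T by rewrite /b subrK.
apply: (le_trans step).
have [rk|kr] := ltnP r kn.
  have hk : r.+1%:R <= kn%:R :> R by rewrite ler_nat.
  rewrite -natr1 in hk.
  have f1 : T * s <= T * N by apply: ler_wpM2l => //; lra.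
  have f2 : b * (s + s') <= b * N by apply: ler_wpM2l.
  have f3 : T * b * (r%:R + 1) <= T * b * kn%:R by apply: ler_wpM2l => //; apply: mulr_ge0.
  rewrite Nb in f1 f2 *.
  nra.
have hk : kn%:R <= r%:R :> R by rewrite ler_nat.
have f1 : T * s <= T * (T * kn%:R) by apply: ler_wpM2l.
have f2 : b * (s + s') <= b * N by apply: ler_wpM2l.
have f3 : kn%:R * (T * (T - b)) <= r%:R * (T * (T - b)).
  by apply: ler_wpM2r => //; apply: mulr_ge0 => //; lra.
rewrite Nb in f2 *.
nra.
Qed.

End SqBound.

Section Coarsen.
Variable R : realType.
Variable V : finType.

Lemma sum_setU1_le (a : {set V}) (S : {set {set V}}) (F : {set V} -> nat) :
  (\sum_(G in a |: S) F G <= F a + \sum_(G in S) F G)%N.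
Proof.
case aS: (a \in S).
  have -> : a |: S = S by apply/setP => x; rewrite !inE; case: eqP => // ->.
  exact: leq_addl.
by rewrite big_setU1 ?aS.
Qed.

Lemma coarsen (Q : {set {set V}}) (T : R) (m : nat) : 0 < T ->
  (\sum_(G in Q) #|G| <= m)%N -> (forall G, G \in Q -> #|G|%:R <= T) ->
  exists Q' : {set {set V}},
    [/\ (\sum_(G in Q') #|G| <= m)%N, (forall G, G \in Q' -> #|G|%:R <= T),
     (forall G, G \in Q -> exists2 G', G' \in Q' & G \subset G') &
     (#|Q'|.-1)%:R * T <= 2%:R * m%:R ].
Proof.
move=> T0; move: {2}#|Q|.+1 (ltnSn #|Q|) => k; elim: k Q => // k IH Q HQk HQs HQT.
case: (boolP [exists A in Q, exists B in Q, (A != B) && ((#|A| + #|B|)%:R <= T)]).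
  case/existsP => A /andP[AQ /existsP[B /andP[BQ /andP[AB ABT]]]].
  have BQA : B \in Q :\ A by rewrite !inE eq_sym AB.
  pose Q1 := (A :|: B) |: ((Q :\ A) :\ B).
  have cardQ1 : (#|Q1| < k)%N.
    have e1 := cardsD1 A Q; rewrite AQ add1n in e1.
    have e2 := cardsD1 B (Q :\ A); rewrite BQA add1n in e2.
    rewrite /Q1 cardsU1; have := leq_b1 ((A :|: B) \notin (Q :\ A) :\ B).
    move: (nat_of_bool _) => bb; move: HQk e1 e2.
    move: #|Q| #|Q :\ A| #|Q :\ A :\ B| => x y z; lia.
  have sumQ : (\sum_(G in Q) #|G| = #|A| + #|B| + \sum_(G in (Q :\ A) :\ B) #|G|)%N.
    by rewrite (big_setD1 A) // (big_setD1 B) // /= addnA.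
  have cU : (#|A :|: B| <= #|A| + #|B|)%N by rewrite cardsU leq_subr.
  have [Q' [H1 H2 H3 H4]] : exists Q' : {set {set V}},
    [/\ (\sum_(G in Q') #|G| <= m)%N, (forall G, G \in Q' -> #|G|%:R <= T),
     (forall G, G \in Q1 -> exists2 G', G' \in Q' & G \subset G') &
     (#|Q'|.-1)%:R * T <= 2%:R * m%:R ].
    apply: IH => //.
      apply: leq_trans (sum_setU1_le _ _ _) _.
      apply: leq_trans HQs; rewrite sumQ leq_add2r //.
    move=> G; rewrite /Q1 !inE => /orP[/eqP ->|/andP[_ /andP[_ GQ]]]; last exact: HQT.
    by apply: le_trans ABT; rewrite ler_nat.
  exists Q'; split => // G GQ.
  case: (boolP ((G == A) || (G == B))) => [GAB|].
    have [|G' G'Q sG'] := H3 (A :|: B); first by rewrite /Q1 !inE eqxx.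
    exists G' => //; apply: subset_trans sG'.
    by case/orP: GAB => /eqP ->; rewrite ?subsetUl ?subsetUr.
  rewrite negb_or => /andP[GA GB].
  by apply: H3; rewrite /Q1 !inE GA GB GQ orbT.
rewrite negb_exists => /forallP Hno.
exists Q; split => //; first by move=> G GQ; exists G.
case: (set_0Vmem Q) => [->|[A0 A0Q]].
  by rewrite cards0 /= mul0r; apply: mulr_ge0; apply: ler0n.
case: (arg_minnP (fun A : {set V} => #|A|) A0Q) => M MQ Mmin.
have key : forall B, B \in Q :\ M -> T <= 2%:R * #|B|%:R.
  move=> B; rewrite !inE => /andP[BM BQ].
  have MQ2 : M \in Q := MQ.
  have := Hno M; rewrite MQ2 /= negb_exists => /forallP /(_ B).
  rewrite BQ /= eq_sym BM /= -ltNge => lt1.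
  have le1 : #|M|%:R <= #|B|%:R :> R by rewrite ler_nat; apply: Mmin.
  rewrite natrD in lt1; lra.
have MQ2 : M \in Q := MQ.
have e1 := cardsD1 M Q; rewrite MQ2 add1n in e1; rewrite e1 /=.
rewrite -sumr_const.
apply: (@le_trans _ _ (\sum_(B in Q :\ M) 2%:R * #|B|%:R)).
  by rewrite big_distrl /=; apply: ler_sum => B HB; rewrite mul1r; apply: key.
rewrite -big_distrr /=; apply: ler_wpM2l; first exact: ler0n.
rewrite -natr_sum ler_nat; apply: leq_trans HQs.
by rewrite [X in (_ <= X)%N](big_setD1 M) //= leq_addl.
Qed.
End Coarsen.

Section Comp.
Variable n : nat.
Variable S : {set {set 'I_n}}.

Definition erel : rel 'I_n := fun x y => [set x; y] \in S.

Lemma erel_sym : symmetric erel.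
Proof. by move=> x y; rewrite /erel setUC. Qed.

Lemma in_comp x y : (y \in component S x) = connect erel x y.
Proof. by rewrite inE. Qed.

Lemma comp_eq x y : y \in component S x -> component S y = component S x.
Proof.
rewrite in_comp => cxy; apply/setP => z; rewrite !in_comp.
apply/idP/idP => [cyz|cxz]; first exact: connect_trans cxy cyz.
apply: connect_trans cxz; by rewrite (sym_connect_sym erel_sym).
Qed.

Definition Q0 := [set component S v | v : 'I_n].

Lemma Q0_sum : (\sum_(G in Q0) #|G| <= n)%N.
Proof.
have tI : trivIset Q0.
  apply/trivIsetP => A B /imsetP[x _ ->] /imsetP[y _ ->] neq.
  apply/pred0P => z /=; apply/negbTE/negP => /andP[zx zy].
  by move/eqP: neq; apply; rewrite -(comp_eq zx) (comp_eq zy).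
move/eqP: tI => ->; rewrite -[X in (_ <= X)%N](card_ord n); exact: max_card.
Qed.

Lemma comp_le_L v : (#|component S v| <= largest_component_size S)%N.
Proof. by rewrite /largest_component_size; apply: (leq_bigmax v). Qed.

Lemma edge_in_comp x y : [set x; y] \in S -> [set x; y] \subset component S x.
Proof.
move=> xyS; apply/subsetP => z; rewrite !inE => /orP[] /eqP ->.
  exact: connect0.
by apply: connect1.
Qed.

End Comp.

Lemma card_setP (T : finType) (E : {set T}) (P : pred T) :
  #|[set e in E | P e]| = (\sum_(e in E) (P e : nat))%N.
Proof.
rewrite -sum1_card big_mkcond [RHS]big_mkcond /=; apply: eq_bigr => e _.
by rewrite !inE; case: (e \in E); case: (P e).
Qed.

Section Det.
Variable R : realType.

Lemma det_bound n (E S : {set {set 'I_n}}) (T : R) : 0 < T ->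
  is_simple_graph E -> (largest_component_size S)%:R <= T ->
  exists Q' : {set {set 'I_n}},
    [/\ (\sum_(G in Q') #|G| <= n)%N, (forall G, G \in Q' -> #|G|%:R <= T),
     (#|Q'|.-1)%:R * T <= 2%:R * n%:R &
     (#|[set e in E | e \in S]| <= \sum_(G in Q') edges_in E G)%N].
Proof.
move=> T0 sE LT.
have HQT : forall G, G \in Q0 S -> #|G|%:R <= T.
  move=> G /imsetP[v _ ->]; apply: le_trans LT; rewrite ler_nat; exact: comp_le_L.
have [Q' [H1 H2 H3 H4]] := coarsen T0 (Q0_sum S) HQT.
exists Q'; split => //.
  rewrite card_setP /edges_in.
  under [X in (_ <= X)%N]eq_bigr => G _ do rewrite card_setP.
  rewrite exchange_big /=; apply: leq_sum => e eE.
  case eS: (e \in S) => //=.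
  have := sE e eE; move/eqP/cards2P => [x [y [_ exy]]].
  have [|G' G'Q sG'] := H3 (component S x); first by apply/imsetP; exists x.
  rewrite (bigD1 G') //=; apply: leq_trans (leq_addr _ _).
  rewrite exy in eS *.
  by rewrite (subset_trans (edge_in_comp eS) sG').
Qed.

End Det.

Section Var.
Variable R : realType.
Variable n : nat.
Implicit Types (E S : {set {set 'I_n}}).

Lemma setI1_eq S e : (S :&: [set e] == [set e]) = (e \in S).
Proof.
apply/eqP/idP => [h|eS].
  have : e \in S :&: [set e] by rewrite h set11.
  by rewrite inE => /andP[].
by apply/setIidPr; rewrite sub1set.
Qed.

Lemma span1 (e : {set 'I_n}) : Defs.span [set e] = e.
Proof. by rewrite /Defs.span big_set1. Qed.

Lemma sum_ind (mu : {ffun {set {set 'I_n}} -> R}) (b : pred {set {set 'I_n}}) :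
  \sum_S mu S * (b S)%:R = prob mu b.
Proof.
rewrite /prob [RHS]big_mkcond /=; apply: eq_bigr => S _.
by case: (b S); rewrite ?mulr1 ?mulr0.
Qed.

Lemma meet_count (E : {set {set 'I_n}}) e : is_simple_graph E -> e \in E ->
  (\sum_(f in E) (~~ [disjoint e & f] : nat) <= 2 * n)%N.
Proof.
move=> sE eE; rewrite -card_setP.
have := sE e eE; move/eqP/cards2P => [x [y [_ ->]]].
pose Ax := [set [set x; z] | z : 'I_n]; pose Ay := [set [set y; z] | z : 'I_n].
apply: (@leq_trans #|Ax :|: Ay|).
  apply: subset_leq_card; apply/subsetP => f; rewrite !inE => /andP[fE].
  have := sE f fE; move/eqP/cards2P => [a [b [_ ->]]].
  case/pred0Pn => z /=; rewrite !inE => /andP[/orP[] /eqP -> /orP[] /eqP zab].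
  - by apply/orP; left; apply/imsetP; exists b => //; rewrite zab.
  - by apply/orP; left; apply/imsetP; exists a => //; rewrite zab setUC.
  - by apply/orP; right; apply/imsetP; exists b => //; rewrite zab.
  - by apply/orP; right; apply/imsetP; exists a => //; rewrite zab setUC.
apply: leq_trans (leq_card_setU _ _) _.
by rewrite mul2n -addnn leq_add // (leq_trans (leq_imset_card _ _)) // card_ord.
Qed.


Definition Xc (E S : {set {set 'I_n}}) : R := (#|[set e in E | e \in S]|)%:R.

Lemma var_bound (E : {set {set 'I_n}}) (p : R) (mu : {ffun {set {set 'I_n}} -> R}) :
  is_simple_graph E -> M1p E p mu ->
  \sum_S mu S * (Xc E S - p * #|E|%:R) ^+ 2 <= (2 * n)%:R * #|E|%:R.
Proof.
move=> sE [[mu0 mu1 _] ind pe]; set X := Xc E.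
have XE S : X S = \sum_(e in E) ((e \in S)%:R : R) by rewrite /X /Xc card_setP natr_sum.
have EX : \sum_S mu S * X S = p * #|E|%:R.
  under eq_bigr => S _ do rewrite XE big_distrr /=.
  rewrite exchange_big /= -sumr_const big_distrr /=; apply: eq_bigr => e eE.
  by rewrite mulr1 sum_ind pe.
have EX2 : \sum_S mu S * X S ^+ 2 =
    \sum_(e in E) \sum_(f in E) prob mu (fun S => (e \in S) && (f \in S)).
  under eq_bigr => S _ do rewrite expr2 XE big_distrl big_distrr /=.
  rewrite exchange_big /=; apply: eq_bigr => e eE.
  under eq_bigr => S _ do rewrite !big_distrr /=.
  rewrite exchange_big /=; apply: eq_bigr => f fE.
  rewrite -sum_ind; apply: eq_bigr => S _.
  by case: (e \in S); case: (f \in S); rewrite /= ?mulr1 ?mulr0 ?mul0r.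
have -> : \sum_S mu S * (X S - p * #|E|%:R) ^+ 2 =
    \sum_S mu S * X S ^+ 2 - 2%:R * (p * #|E|%:R) * (\sum_S mu S * X S)
    + (p * #|E|%:R) ^+ 2 * \sum_S mu S.
  rewrite !big_distrr /= -sumrB -big_split; apply: eq_bigr => S _ /=; move: (mu S) (X S) => a b; ring.
rewrite EX mu1 EX2 mulr1.
have h : forall a b : R, a - 2%:R * b * b + b ^+ 2 = a - b ^+ 2 by move=> a b; ring.
rewrite h.
have -> : (p * #|E|%:R) ^+ 2 = \sum_(e in E) \sum_(f in E) p * p.
  by rewrite !sumr_const -mulr_natr -mulr_natr; ring.
rewrite -sumrB.
apply: (@le_trans _ _ (\sum_(e in E) ((2 * n)%:R : R))); last first.
  by rewrite sumr_const mulr_natr.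
apply: ler_sum => e eE; rewrite -sumrB.
apply: (@le_trans _ _ (\sum_(f in E) ((~~ [disjoint e & f] : nat)%:R : R))).
  apply: ler_sum => f fE.
  case: (boolP [disjoint e & f]) => dj /=.
    have := ind [set e] [set f]; rewrite !sub1set eE fE !span1 => /(_ isT isT dj [set e] [set f]).
    have E1 : prob mu (fun S => (S :&: [set e] == [set e]) && (S :&: [set f] == [set f]))
      = prob mu (fun S => (e \in S) && (f \in S)) by apply: eq_bigl => S; rewrite !setI1_eq.
    have E2 : forall g, prob mu (fun S => S :&: [set g] == [set g]) = prob mu (fun S => g \in S).
      by move=> g; apply: eq_bigl => S; rewrite setI1_eq.
    rewrite E1 !E2.
    by rewrite (pe e eE) (pe f fE) => ->; rewrite subrr.
  have hp : 0 <= p * p by rewrite -expr2 sqr_ge0.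
  have hP : prob mu (fun S => (e \in S) && (f \in S)) <= 1.
    by rewrite -mu1 /prob; apply: sum_sub_le.
  lra.
by rewrite -natr_sum ler_nat; apply: meet_count.
Qed.

End Var.

Section CFacts.
Variable R : realType.
Variables (r : nat) (p : R).

Definition cc := (1 + Num.sqrt (((r.+1)%:R * p - 1) / r%:R)) / (r.+1)%:R.

Lemma c_facts : (0 < r)%N -> 1 / (r.+1)%:R < p -> p <= 1 / r%:R -> [/\ 1 < (r%:R + 1) * cc, r%:R * cc <= 1 &
   r%:R * cc ^+ 2 + (1 - r%:R * cc) ^+ 2 = p].
Proof.
move=> r0 pl pu.
have rp : 0 < r%:R :> R by rewrite ltr0n.
have r1p : 0 < r.+1%:R :> R by rewrite ltr0n.
rewrite -natr1 in r1p pl *.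
have pl' : 1 < (r%:R + 1) * p by move: pl; rewrite ltr_pdivrMr // mulrC.
have pu' : r%:R * p <= 1 by move: pu; rewrite ler_pdivlMr // mulrC.
set y := ((r%:R + 1) * p - 1) / r%:R.
have y0 : 0 < y by rewrite /y divr_gt0 // subr_gt0.
have ry : r%:R * y = (r%:R + 1) * p - 1 by rewrite /y mulrCA divff ?mulr1 // gt_eqF.
set s := Num.sqrt y.
have s0 : 0 < s by rewrite /s sqrtr_gt0.
have s2 : s ^+ 2 = y by rewrite /s sqr_sqrtr // ltW.
have cE : cc = (1 + s) / (r%:R + 1) by rewrite /cc -natr1.
have r1n : r%:R + 1 != 0 :> R by apply: lt0r_neq0; lra.
have cE' : (r%:R + 1) * cc = 1 + s by rewrite cE mulrCA divff ?mulr1.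
split.
- by rewrite cE'; lra.
- (* r c <= 1  iff  r (1+s) <= r+1 iff r s <= 1 *)
  have rs : r%:R * s <= 1.
    have h : (r%:R * s) ^+ 2 <= 1.
      rewrite exprMn s2 expr2 -mulrA ry.
      have : r%:R * ((r%:R + 1) * p) <= r%:R + 1 by nra.
      lra.
    rewrite -[X in _ <= X](expr1n R 2) in h.
    have : 0 <= r%:R * s by nra.
    by move=> h0; rewrite -(ler_pXn2r (_ : 0 < 2)%N) ?nnegrE //.
  have : (r%:R + 1) * (r%:R * cc) <= (r%:R + 1) * 1.
    by rewrite mulrCA cE'; nra.
  by rewrite ler_pM2l //; lra.
- have hc : cc * (r%:R + 1) = 1 + s by rewrite mulrC.
  have e : (r%:R + 1) ^+ 2 * (r%:R * cc ^+ 2 + (1 - r%:R * cc) ^+ 2) = (r%:R + 1) ^+ 2 * p.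
    have -> : (r%:R + 1) ^+ 2 * (r%:R * cc ^+ 2 + (1 - r%:R * cc) ^+ 2)
      = r%:R * ((r%:R + 1) * cc) ^+ 2 + ((r%:R + 1) - r%:R * ((r%:R + 1) * cc)) ^+ 2 by ring.
    rewrite cE'.
    have -> : r%:R * (1 + s) ^+ 2 + (r%:R + 1 - r%:R * (1 + s)) ^+ 2 =
       (r%:R + 1) * (1 + r%:R * s ^+ 2) by ring.
    rewrite s2 ry; ring.
  move: e; move/(congr1 (fun z => z / (r%:R + 1) ^+ 2)).
  by rewrite ![(r%:R + 1) ^+ 2 * _]mulrC !mulfK ?expf_neq0.
Qed.

End CFacts.

Section DetMain.
Variable R : realType.

Lemma det_main n (E S : {set {set 'I_n}}) (Q l eps1 p : R) (r : nat) :
  is_simple_graph E -> 0 < Q -> (0 < n)%N -> 1 < (r%:R + 1) * l -> r%:R * l <= 1 ->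
  0 < eps1 -> 0 <= p -> p <= 1 ->
  (forall U : {set 'I_n}, `| (edges_in E U)%:R - Q * (#|U|%:R) ^+ 2 / 2 | <= eps1 * (Q * (n%:R) ^+ 2)) ->
  2%:R * (2%:R * r%:R + 5%:R) * eps1 <= p - (r%:R * l ^+ 2 + (1 - r%:R * l) ^+ 2) ->
  p * #|E|%:R - eps1 * (Q * n%:R ^+ 2) < Xc R E S ->
  l * n%:R <= (largest_component_size S)%:R.
Proof.
move=> sE Q0 n0 l1 l2 e0 p0 p1 pr gap hX.
set nn := n%:R.
have nn0 : 0 < nn by rewrite ltr0n.
have r0 : 0 <= r%:R :> R by apply: ler0n.
have lp : 0 < l by nra.
rewrite leNgt; apply/negP => hL.
have T0 : 0 < l * nn by apply: mulr_gt0.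
have [Q' [H1 H2 H3 H4]] := det_bound T0 sE (ltW hL).
have hE : Q * nn ^+ 2 / 2 - eps1 * (Q * nn ^+ 2) <= #|E|%:R.
  have := pr setT.
  have -> : edges_in E setT = #|E|.
    by rewrite /edges_in; apply: eq_card => e; rewrite !inE subsetT andbT.
  rewrite cardsT card_ord -/nn => /ler_normlP [h1 h2]; lra.
set k := #|Q'|.
have hX1 : Xc R E S <= \sum_(G in Q') (Q * (#|G|%:R) ^+ 2 / 2 + eps1 * (Q * nn ^+ 2)).
  apply: (@le_trans _ _ (\sum_(G in Q') ((edges_in E G)%:R : R))).
    by rewrite /Xc -natr_sum ler_nat.
  apply: ler_sum => G _; have := pr G => /ler_normlP [h1 h2]; lra.
rewrite big_split /= sumr_const -[_ *+ #|Q'|]mulr_natr in hX1.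
have hsq : \sum_(G in Q') (#|G|%:R : R) ^+ 2 <= r%:R * (l * nn) ^+ 2 + (nn - r%:R * (l * nn)) ^+ 2.
  apply: sq_bound => //.
  - by rewrite -natr_sum ler_nat.
  - by rewrite subr_ge0 mulrA ler_piMl // ltW.
  - by rewrite lerBlDr; nra.
have hk : k%:R <= 2%:R * r%:R + 3%:R :> R.
  have hk1 : (k.-1)%:R * l <= 2%:R.
    by move: H3; rewrite mulrA ler_pM2r.
  have hk2 : (k.-1)%:R <= 2%:R * (r%:R + 1) :> R.
    have hk0 : 0 <= (k.-1)%:R :> R by apply: ler0n.
    nra.
  have : (k <= k.-1 + 1)%N by rewrite addn1 leqSpred.
  rewrite -(ler_nat R) natrD => h; lra.
have hsum : \sum_(G in Q') Q * (#|G|%:R) ^+ 2 / 2 =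
    Q / 2 * \sum_(G in Q') (#|G|%:R) ^+ 2.
  by rewrite big_distrr /=; apply: eq_bigr => G _; rewrite mulrAC.
rewrite hsum in hX1.
have Q2 : 0 <= Q / 2 by apply: divr_ge0 => //; apply: ltW.
have hX2 := ler_wpM2l Q2 hsq.
have eQ : 0 < eps1 * (Q * nn ^+ 2) by apply: mulr_gt0 => //; apply: mulr_gt0 => //; apply: exprn_gt0.
have hX3 : eps1 * (Q * nn ^+ 2) * k%:R <= eps1 * (Q * nn ^+ 2) * (2%:R * r%:R + 3%:R).
  by apply: ler_wpM2l => //; apply: ltW.
have hp1 : p * (Q * nn ^+ 2 / 2 - eps1 * (Q * nn ^+ 2)) <= p * #|E|%:R by apply: ler_wpM2l.
have hp2 : p * (eps1 * (Q * nn ^+ 2)) <= eps1 * (Q * nn ^+ 2) by rewrite ler_piMl // ltW.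
set Z := Q * nn ^+ 2 in eQ hX3 hp1 hp2 hE hX1 hX hX2.
have ZE : Q / 2 * (r%:R * (l * nn) ^+ 2 + (nn - r%:R * (l * nn)) ^+ 2)
   = Z / 2 * (r%:R * l ^+ 2 + (1 - r%:R * l) ^+ 2) by rewrite /Z; ring.
rewrite ZE in hX2.
have Z0 : 0 < Z by rewrite /Z; apply: mulr_gt0 => //; apply: exprn_gt0.
have : Z * (2%:R * (2%:R * r%:R + 5%:R) * eps1) <= Z * (p - (r%:R * l ^+ 2 + (1 - r%:R * l) ^+ 2)).
  by apply: ler_wpM2l => //; apply: ltW.
move: hX hX1 hX2 hX3 hp1 hp2; rewrite /Z; clearbody Z.
move: (Xc R E S) (#|E|%:R : R) (k%:R : R) (\sum_(G in Q') (#|G|%:R : R) ^+ 2) => X EE kk ss.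
move=> *; nra.
Qed.

End DetMain.

Section Part1.
Variable R : realType.

Lemma growth_bound (q : nat -> R) :
  (forall M : R, exists N : nat, forall n : nat, (N <= n)%N -> M * ln (n%:R) <= q n * n%:R) ->
  forall B : R, 0 < B -> exists N : nat, forall n, (N <= n)%N -> B <= q n * n%:R.
Proof.
move=> gr B B0.
have l2 : 0 < ln (2%:R : R) by apply: ln_gt0; rewrite ltr1n.
have [N HN] := gr (B / ln 2%:R).
exists (maxn N 2) => n; rewrite geq_max => /andP[Nn n2].
apply: le_trans (HN n Nn).
have : ln 2%:R <= ln (n%:R : R).
  by rewrite ler_ln ?posrE ?ltr0n // ?ler_nat //; apply: leq_trans n2.
move=> h; rewrite -[X in X <= _](divfK (lt0r_neq0 l2)) mulrC [X in _ <= X]mulrC.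
apply: ler_wpM2r => //; apply: divr_ge0; apply: ltW => //.
Qed.

Lemma part1 (r : nat) (p : R) (H : forall n : nat, {set {set 'I_n}}) (q : nat -> R) :
  (0 < r)%N -> 1 / (r.+1)%:R < p -> p <= 1 / r%:R ->
  (forall n, is_simple_graph (H n)) ->
  weakly_pseudorandom H q ->
  (forall M : R, exists N : nat, forall n : nat, (N <= n)%N ->
      M * ln (n%:R) <= q n * n%:R) ->
  forall eps delta : R, 0 < eps -> 0 < delta ->
     exists N : nat, forall n : nat, (N <= n)%N ->
       forall mu : {ffun {set {set 'I_n}} -> R}, M1p (H n) p mu ->
         1 - delta <= prob mu (fun S =>
           (1 - eps) * cc r p * n%:R <= (largest_component_size S)%:R).
Proof.
move=> r0 pl pu sH wp gr eps delta eps0 delta0.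
have [c1 c2 c3] := c_facts r0 pl pu.
set c := cc r p in c1 c2 c3 *.
set rr := r%:R : R.
have rr1 : 1 <= rr by rewrite /rr ler1n.
have p0 : 0 < p.
  apply: lt_trans pl; apply: divr_gt0; rewrite ?ltr01 // ltr0n.
have p1 : p <= 1.
  have : rr * p <= 1 by move: pu; rewrite ler_pdivlMr ?mulr1 ?ltr0n // mulrC.
  nra.
have cp : 0 < c by nra.
have [m0 hm1 hm2] : exists2 m0, 1 < (rr + 1) * m0 & m0 < c.
  exists ((c + (rr + 1)^-1) / 2).
    have h : (rr + 1) * (rr + 1)^-1 = 1 by rewrite mulfV //; apply: lt0r_neq0; lra.
    move: h; move: ((rr + 1)^-1) => ir h; nra.
  have h : (rr + 1) * (rr + 1)^-1 = 1 by rewrite mulfV //; apply: lt0r_neq0; lra.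
  have hi : 0 < (rr + 1)^-1 by rewrite invr_gt0; lra.
  move: h hi; move: ((rr + 1)^-1) => ir h hi; nra.
set l := Num.max ((1 - eps) * c) m0.
have hl1 : (1 - eps) * c <= l by rewrite le_max lexx.
have hl2 : 1 < (rr + 1) * l.
  apply: lt_le_trans hm1 _; apply: ler_wpM2l; first lra.
  by rewrite le_max lexx orbT.
have hl3 : l < c by rewrite gt_max hm2 andbT; nra.
have hl4 : rr * l <= 1 by nra.
set gap := p - (rr * l ^+ 2 + (1 - rr * l) ^+ 2).
have gap0 : 0 < gap.
  have -> : gap = rr * (c - l) * ((rr + 1) * (c + l) - 2%:R).
    by rewrite /gap -{1}c3; ring.
  apply: mulr_gt0; first by apply: mulr_gt0; lra.
  nra.
have gap1 : gap <= 1.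
  have : 0 <= rr * l ^+ 2 + (1 - rr * l) ^+ 2.
    by apply: addr_ge0; [apply: mulr_ge0; [lra|apply: sqr_ge0]|apply: sqr_ge0].
  rewrite /gap; lra.
set eps1 := gap / (2%:R * (2%:R * rr + 5%:R)).
have K0 : 0 < 2%:R * (2%:R * rr + 5%:R) :> R by lra.
have eps10 : 0 < eps1 by apply: divr_gt0.
have eps1E : 2%:R * (2%:R * rr + 5%:R) * eps1 = gap.
  by rewrite /eps1 mulrC divfK //; apply: lt0r_neq0.
have eps1h : eps1 <= 1 / 2%:R.
  have : 2%:R * (2%:R * rr + 5%:R) * eps1 <= 1 by rewrite eps1E.
  move=> h; nra.
have [N1 HN1] := wp eps1 eps10.
have B0 : 0 < 2%:R / (eps1 ^+ 2 * delta).
  by apply: divr_gt0; rewrite ?ltr0n //; apply: mulr_gt0 => //; apply: exprn_gt0.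
have [N2 HN2] := growth_bound gr B0.
exists (maxn (maxn N1 N2) 1) => n; rewrite !geq_max => /andP[/andP[n1 n2] n3] mu Hmu.
set nn := n%:R : R.
have nn1 : 1 <= nn by rewrite /nn ler1n.
set Q := q n.
have hQn : 2%:R / (eps1 ^+ 2 * delta) <= Q * nn by apply: HN2.
have Q0 : 0 < Q.
  have : 0 < Q * nn by apply: lt_le_trans hQn.
  by rewrite pmulr_lgt0 // ?ltr0n.
have pr := HN1 n n1.
set E := H n.
set EE := #|E|%:R : R.
have hE : EE <= Q * nn ^+ 2.
  have := pr setT.
  have -> : edges_in E setT = #|E|.
    by rewrite /edges_in; apply: eq_card => e; rewrite !inE subsetT andbT.
  rewrite cardsT card_ord -/nn -/EE => /ler_normlP [h1 h2].
  have : 0 <= Q * nn ^+ 2 by apply: mulr_ge0; [apply: ltW | apply: sqr_ge0].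
  move: h2 eps1h; move: (Q * nn ^+ 2) => Z; move=> *; nra.
set t := eps1 * (Q * nn ^+ 2).
have t0 : 0 < t by apply: mulr_gt0 => //; apply: mulr_gt0 => //; apply: exprn_gt0; lra.
have Hmu' := Hmu; case: Hmu' => [[mu0 mu1 _] _ _].
have hvar := var_bound (sH n) Hmu.
have hcheb := cheb mu0 (Xc R E) (p * EE) t0.
have hbad : \sum_(S | t <= `|Xc R E S - p * EE|) mu S <= delta.
  apply: (le_trans hcheb); rewrite ler_pdivrMr ?exprn_gt0 //.
  apply: (le_trans hvar).
  have h2 : (2 * n)%:R * EE <= 2%:R * nn * (Q * nn ^+ 2).
    rewrite natrM -/nn; apply: ler_wpM2l => //; apply: mulr_ge0; lra.
  apply: (le_trans h2).
  have -> : delta * t ^+ 2 = (delta * eps1 ^+ 2 * (Q * nn)) * (Q * nn ^+ 3).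
    by rewrite /t; ring.
  have -> : 2%:R * nn * (Q * nn ^+ 2) = 2%:R * (Q * nn ^+ 3) by ring.
  apply: ler_wpM2r; first by apply: mulr_ge0; [apply: ltW | apply: exprn_ge0; lra].
  have de0 : 0 < delta * eps1 ^+ 2 by apply: mulr_gt0 => //; apply: exprn_gt0.
  move: hQn; rewrite ler_pdivrMr; last by rewrite mulrC.
  by rewrite mulrC [eps1 ^+ 2 * delta]mulrC.
apply: (@le_trans _ _ (\sum_(S | `|Xc R E S - p * EE| < t) mu S)).
  rewrite (sum_compl (fun S => `|Xc R E S - p * EE| < t) mu1) lerD2l lerN2.
  by rewrite (eq_bigl (fun S => t <= `|Xc R E S - p * EE|)) // => S; rewrite -leNgt.
apply: sum_mono => // S hS.
apply: le_trans (_ : l * nn <= _).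
  by apply: ler_wpM2r; lra.
apply: (det_main (sH n) Q0 _ hl2 hl4 eps10 (ltW p0) p1 pr).
- exact: n3.
- by rewrite eps1E lexx.
- by move: hS; rewrite ltr_distl => /andP[].
Qed.

End Part1.

Section Color.
Variable R : realType.
Variable r : nat.
Variable c : R.
Variable n : nat.

Definition wc (k : 'I_r.+1) : R := if (k < r)%N then c else 1 - r%:R * c.
Definition Wc (f : {ffun 'I_n -> 'I_r.+1}) : R := \prod_v wc (f v).
Definition edgeset (E : {set {set 'I_n}}) (f : {ffun 'I_n -> 'I_r.+1}) : {set {set 'I_n}} :=
  [set e in E | [forall x in e, forall y in e, f x == f y]].
Definition muC (E : {set {set 'I_n}}) : {ffun {set {set 'I_n}} -> R} :=
  [ffun S => \sum_(f : {ffun 'I_n -> 'I_r.+1}) if edgeset E f == S then Wc f else 0].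

Lemma prob_push E (P : pred {set {set 'I_n}}) :
  prob (muC E) P = \sum_f Wc f * (P (edgeset E f))%:R.
Proof.
rewrite /prob.
under eq_bigr => S _ do rewrite ffunE.
rewrite exchange_big /=; apply: eq_bigr => f _.
case Pe: (P (edgeset E f)).
  rewrite (bigD1 (edgeset E f)) //= eqxx big1 ?addr0 ?mulr1 // => S /andP[_ hS].
  by rewrite eq_sym (negbTE hS).
rewrite big1 ?mulr0 // => S PS; case: eqP => // h.
by rewrite -h Pe in PS.
Qed.


Hypotheses (c0 : 0 <= c) (rc1 : r%:R * c <= 1).

Lemma w0 k : 0 <= wc k.
Proof. by rewrite /wc; case: ifP => _ //; rewrite subr_ge0. Qed.

Lemma wsum : \sum_k wc k = 1.
Proof.
rewrite big_ord_recr /= /wc ltnn /=.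
have -> : \sum_(i < r) (if (widen_ord (leqnSn r) i < r)%N then c else 1 - r%:R * c) = \sum_(i < r) c.
  by apply: eq_bigr => i _; rewrite /= ltn_ord.
by rewrite sumr_const card_ord -mulr_natl; ring.
Qed.

Lemma W0 f : 0 <= Wc f.
Proof. by apply: prodr_ge0 => v _; apply: w0. Qed.

Lemma prod_sum (g : 'I_n -> 'I_r.+1 -> R) :
  \sum_f Wc f * \prod_v g v (f v) = \prod_v \sum_k wc k * g v k.
Proof.
rewrite bigA_distr_bigA /=; apply: eq_bigr => f _.
by rewrite /Wc -big_split.
Qed.

Lemma W1 : \sum_f Wc f = 1.
Proof.
have h := prod_sum (fun _ _ => 1).
have e1 : \sum_f Wc f * \prod_(v : 'I_n) (1 : R) = \sum_f Wc f.
  by apply: eq_bigr => f _; rewrite big1_eq mulr1.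
rewrite -e1 h; apply: big1 => v _.
by under eq_bigr => k _ do rewrite mulr1; apply: wsum.
Qed.

Lemma prod_if (x : 'I_n) (a : R) (F : 'I_n -> R) :
  \prod_v (if v == x then a else F v) = a * \prod_(v | v != x) F v.
Proof.
rewrite (bigD1 x) //= eqxx; congr (_ * _); apply: eq_bigr => v vx.
by rewrite (negbTE vx).
Qed.

Lemma sum_delta (i : 'I_r.+1) : \sum_k wc k * (k == i)%:R = wc i.
Proof.
rewrite (bigD1 i) //= eqxx mulr1 big1 ?addr0 // => k ki.
by rewrite (negbTE ki) mulr0.
Qed.

Lemma marg1 (x : 'I_n) (i : 'I_r.+1) : \sum_f Wc f * (f x == i)%:R = wc i.
Proof.
have h := prod_sum (fun v k => if v == x then (k == i)%:R else 1).
have e1 : \sum_f Wc f * \prod_v (if v == x then (f v == i)%:R else 1) = \sum_f Wc f * (f x == i)%:R.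
  apply: eq_bigr => f _.
  by rewrite (bigD1 x) //= eqxx big1 ?mulr1 // => v vx; rewrite (negbTE vx).
rewrite -e1 h (bigD1 x) //= eqxx sum_delta big1 ?mulr1 // => v vx.
rewrite (negbTE vx); under eq_bigr => k _ do rewrite mulr1; apply: wsum.
Qed.

Lemma marg2 (x y : 'I_n) (i j : 'I_r.+1) : x != y ->
  \sum_f Wc f * ((f x == i)%:R * (f y == j)%:R) = wc i * wc j.
Proof.
move=> xy.
have h := prod_sum (fun v k => if v == x then (k == i)%:R else if v == y then (k == j)%:R else 1).
have e1 : \sum_f Wc f * \prod_v (if v == x then (f v == i)%:R else if v == y then (f v == j)%:R else 1)
   = \sum_f Wc f * ((f x == i)%:R * (f y == j)%:R).
  apply: eq_bigr => f _.
  rewrite (bigD1 x) //= eqxx (bigD1 y) 1?eq_sym //= eqxx (negbTE (_ : y != x)) 1?eq_sym //.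
  rewrite big1 ?mulr1 //.
  by move=> v /andP[vx vy]; rewrite (negbTE vy) (negbTE vx).
rewrite -e1 h (bigD1 x) //= eqxx sum_delta (bigD1 y) 1?eq_sym //= (negbTE xy) eqxx.
rewrite sum_delta big1 ?mulr1 // => v /andP[vx vy].
rewrite (negbTE vx) (negbTE vy); under eq_bigr => k _ do rewrite mulr1; apply: wsum.
Qed.

End Color.

Section Color2.
Variable R : realType.
Variable r : nat.
Variable c : R.
Variable n : nat.
Hypotheses (c0 : 0 <= c) (rc1 : r%:R * c <= 1).

Local Notation wc := (@wc R r c).
Local Notation Wc := (@Wc R r c n).

Lemma forall_pair (f : {ffun 'I_n -> 'I_r.+1}) (x y : 'I_n) :
  [forall a in [set x; y], forall b in [set x; y], f a == f b] = (f x == f y).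
Proof.
apply/idP/idP => [/forallP /(_ x)|hxy].
  by rewrite !inE eqxx /= => /forallP /(_ y); rewrite !inE eqxx orbT.
apply/forallP => a; apply/implyP; rewrite !inE => /orP[] /eqP ->;
  apply/forallP => b; apply/implyP; rewrite !inE => /orP[] /eqP -> //; by rewrite eq_sym.
Qed.

Lemma eq_as_sum (a b : 'I_r.+1) : ((a == b)%:R : R) = \sum_k (a == k)%:R * (b == k)%:R.
Proof.
rewrite (bigD1 a) //= eqxx mul1r big1 ?addr0 => [|k ka]; last by rewrite eq_sym (negbTE ka) mul0r.
by rewrite eq_sym.
Qed.

Lemma wsq : \sum_k wc k * wc k = r%:R * c ^+ 2 + (1 - r%:R * c) ^+ 2.
Proof.
rewrite big_ord_recr /= /wc ltnn /=.
have -> : \sum_(i < r) (if (widen_ord (leqnSn r) i < r)%N then c else 1 - r%:R * c) *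
   (if (widen_ord (leqnSn r) i < r)%N then c else 1 - r%:R * c) = \sum_(i < r) c * c.
  by apply: eq_bigr => i _; rewrite /= ltn_ord.
by rewrite sumr_const card_ord -mulr_natl; ring.
Qed.

Lemma edge_prob (E : {set {set 'I_n}}) e : is_simple_graph E -> e \in E ->
  prob (muC r c E) (fun S => e \in S) = r%:R * c ^+ 2 + (1 - r%:R * c) ^+ 2.
Proof.
move=> sE eE; rewrite prob_push.
have := sE e eE; move/eqP/cards2P => [x [y [xy exy]]].
have -> : \sum_f Wc f * (e \in edgeset E f)%:R = \sum_f Wc f * (f x == f y)%:R.
  by apply: eq_bigr => f _; rewrite /edgeset inE eE /= exy forall_pair.
under eq_bigr => f _ do rewrite eq_as_sum big_distrr /=.
rewrite exchange_big /= -wsq; apply: eq_bigr => k _.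
exact: marg2.
Qed.

End Color2.

Section Indep.
Variable R : realType.
Variable r : nat.
Variable c : R.
Variable n : nat.

Local Notation Wc := (@Wc R r c n).
Local Notation Col := {ffun 'I_n -> 'I_r.+1}.

Lemma prod_indep (D : {set 'I_n}) (phi psi : Col -> R) :
  (forall f g : Col, (forall v, v \in D -> f v = g v) -> phi f = phi g) ->
  (forall f g : Col, (forall v, v \notin D -> f v = g v) -> psi f = psi g) ->
  \sum_f Wc f * (phi f * psi f) = (\sum_f Wc f * phi f) * (\sum_f Wc f * psi f).
Proof.
move=> hphi hpsi.
pose m (f g : Col) : Col := [ffun v => if v \in D then f v else g v].
pose sg (pr : Col * Col) := (m pr.1 pr.2, m pr.2 pr.1).
have sgK : cancel sg sg.
  move=> [f g]; rewrite /sg /=; congr pair; apply/ffunP => v; rewrite !ffunE;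
  by case: (v \in D).
have Wm f g : Wc (m f g) * Wc (m g f) = Wc f * Wc g.
  rewrite /Wc -!big_split /=; apply: eq_bigr => v _; rewrite !ffunE.
  by case: (v \in D) => //; rewrite mulrC.
rewrite big_distrl /=; under [in RHS]eq_bigr => f _ do rewrite big_distrr /=.
rewrite pair_bigA /= (reindex_inj (can_inj sgK)) /=.
have -> : \sum_p Wc (m p.1 p.2) * phi (m p.1 p.2) * (Wc (m p.2 p.1) * psi (m p.2 p.1))
   = \sum_(p : Col * Col) (Wc p.1 * (phi p.1 * psi p.1)) * Wc p.2.
  apply: eq_bigr => [[f g]] _ /=.
  have -> : phi (m f g) = phi f by apply: hphi => v vD; rewrite ffunE vD.
  have -> : psi (m g f) = psi f by apply: hpsi => v vD; rewrite ffunE (negbTE vD).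
  have := Wm f g; move: (Wc (m f g)) (Wc (m g f)) => a b h.
  have -> : a * phi f * (b * psi f) = (a * b) * (phi f * psi f) by ring.
  rewrite h; ring.
rewrite -(pair_bigA _ (fun f g => Wc f * (phi f * psi f) * Wc g)) /=.
by apply: eq_bigr => f _; rewrite -big_distrr /= W1 mulr1.
Qed.

End Indep.

Section M1pC.
Variable R : realType.
Variable r : nat.
Variable c : R.
Variable n : nat.

Local Notation Col := {ffun 'I_n -> 'I_r.+1}.

Lemma edgeset_restr (E A : {set {set 'I_n}}) (f g : Col) :
  (forall v, v \in Defs.span A -> f v = g v) ->
  edgeset E f :&: A = edgeset E g :&: A.
Proof.
move=> fg; apply/setP => e; rewrite !inE; case eA: (e \in A); rewrite ?andbF ?andbT //.
have sub : e \subset Defs.span A by rewrite /Defs.span; apply: bigcup_sup.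
congr (_ && _).
apply/forallP/forallP => H x; move: (H x); case xe: (x \in e) => //= /forallP H2;
  apply/forallP => y; have := H2 y; case ye: (y \in e) => //=.
  by rewrite !fg // (subsetP sub).
by rewrite !fg // (subsetP sub).
Qed.

Lemma muC_M1p (E : {set {set 'I_n}}) (p : R) :
  0 <= c -> r%:R * c <= 1 -> is_simple_graph E ->
  r%:R * c ^+ 2 + (1 - r%:R * c) ^+ 2 = p -> M1p E p (muC r c E).
Proof.
move=> c0 rc1 sE hp; split.
- split.
  + move=> S; rewrite ffunE; apply: sumr_ge0 => f _; case: ifP => _ //; exact: W0.
  + have := prob_push r c E (fun _ => true); rewrite /prob => ->.
    under eq_bigr => f _ do rewrite mulr1; exact: W1.
  + move=> S; rewrite ffunE => h.
    case: (pickP (fun f : Col => edgeset E f == S)) => [f /eqP <-|none].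
      by apply/subsetP => e; rewrite inE => /andP[].
    by move: h; rewrite big1 ?eqxx // => f _; rewrite none.
- move=> A B sA sB dj a b.
  rewrite !prob_push.
  have -> : \sum_(f : Col) Wc c f * (((edgeset E f :&: A == a) && (edgeset E f :&: B == b)))%:R
     = \sum_(f : Col) Wc c f * ((edgeset E f :&: A == a)%:R * (edgeset E f :&: B == b)%:R).
    by apply: eq_bigr => f _; rewrite -natrM mulnb.
  apply: (@prod_indep _ _ _ _ (Defs.span A)).
    by move=> f g fg; rewrite (edgeset_restr E fg).
  move=> f g fg; rewrite (edgeset_restr (A := B) E (f := f) (g := g)) // => v vB.
  by apply: fg; rewrite (disjointFl dj vB).
- move=> e eE; rewrite -hp; exact: edge_prob.
Qed.
End M1pC.

Section Conc.
Variable R : realType.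
Variable r : nat.
Variable c : R.
Variable n : nat.

Local Notation Col := {ffun 'I_n -> 'I_r.+1}.
Local Notation Wc := (@Wc R r c n).
Local Notation wc := (@wc R r c).

Definition Nk (f : Col) (k : 'I_r.+1) : R := (#|[set v | f v == k]|)%:R.

Lemma NkE f k : Nk f k = \sum_v ((f v == k)%:R : R).
Proof.
rewrite /Nk -sum1_card natr_sum big_mkcond /=; apply: eq_bigr => v _.
by rewrite inE; case: (f v == k).
Qed.

Lemma comp_color (E : {set {set 'I_n}}) (f : Col) v :
  component (edgeset E f) v \subset [set u | f u == f v].
Proof.
apply/subsetP => u; rewrite !inE => conn.
have cl : closed (fun x y => [set x; y] \in edgeset E f) [pred u | f u == f v].
  move=> x y; rewrite inE => /andP[_]; rewrite forall_pair => /eqP h.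
  by rewrite !inE h.
by have := closed_connect cl conn; rewrite !inE eqxx => <-.
Qed.

Lemma L_le (E : {set {set 'I_n}}) (f : Col) (B : R) : 0 <= B ->
  (forall k, Nk f k <= B) -> (largest_component_size (edgeset E f))%:R <= B.
Proof.
move=> B0 hk.
have h : (largest_component_size (edgeset E f) <= Num.trunc B)%N.
  apply/bigmax_leqP => v _; rewrite truncn_ge_nat //.
  apply: le_trans (hk (f v)); rewrite /Nk ler_nat.
  exact: subset_leq_card (comp_color E f v).
apply: le_trans (_ : (Num.trunc B)%:R <= B); first by rewrite ler_nat.
by rewrite truncn_le.
Qed.

Hypotheses (c0 : 0 <= c) (rc1 : r%:R * c <= 1).

Lemma wc_le1 k : wc k <= 1.
Proof.
rewrite /wc; case: ifP => hk; last first.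
  by rewrite lerBlDr lerDl mulr_ge0 // ler0n.
have r1 : 1 <= r%:R :> R by rewrite ler1n; apply: leq_ltn_trans hk.
have := ler_wpM2r c0 r1; rewrite mul1r => h; exact: le_trans h rc1.
Qed.

Lemma var_Nk k : \sum_f Wc f * (Nk f k - n%:R * wc k) ^+ 2 <= n%:R.
Proof.
have EN : \sum_f Wc f * Nk f k = n%:R * wc k.
  under eq_bigr => f _ do rewrite NkE big_distrr /=.
  rewrite exchange_big /=.
  under eq_bigr => v _ do rewrite marg1.
  by rewrite sumr_const card_ord mulr_natl.
have EN2 : \sum_f Wc f * Nk f k ^+ 2 <= n%:R ^+ 2 * wc k ^+ 2 + n%:R * wc k.
  have -> : \sum_f Wc f * Nk f k ^+ 2 =
      \sum_u \sum_v \sum_f Wc f * ((f u == k)%:R * (f v == k)%:R).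
    have pw : forall f : Col, Wc f * Nk f k ^+ 2 =
        \sum_u \sum_v Wc f * ((f u == k)%:R * (f v == k)%:R).
      move=> f; rewrite expr2 NkE big_distrl big_distrr /=; apply: eq_bigr => u _.
      by rewrite big_distrr big_distrr /=; apply: eq_bigr => v _; ring.
    under eq_bigr => f _ do rewrite pw.
    rewrite exchange_big /=; apply: eq_bigr => u _.
    by rewrite exchange_big.
  apply: (@le_trans _ _ (\sum_(u : 'I_n) \sum_(v : 'I_n) (wc k ^+ 2 + (u == v)%:R * wc k))).
    apply: ler_sum => u _; apply: ler_sum => v _.
    case: (eqVneq u v) => [<-|uv].
      have -> : \sum_f Wc f * ((f u == k)%:R * (f u == k)%:R) = wc k.
        by rewrite -(marg1 c u k); apply: eq_bigr => f _; case: (f u == k); rewrite ?mulr1 ?mulr0.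
      by rewrite mul1r lerDr sqr_ge0.
    by rewrite marg2 // mul0r addr0 expr2.
  have pw2 : forall u : 'I_n, \sum_(v : 'I_n) (wc k ^+ 2 + (u == v)%:R * wc k) = wc k ^+ 2 * n%:R + wc k.
    move=> u; rewrite big_split /= sumr_const card_ord mulr_natr (bigD1 u) //= eqxx mul1r big1 ?addr0 //.
    by move=> v vu; rewrite eq_sym (negbTE vu) mul0r.
  under eq_bigr => u _ do rewrite pw2.
  rewrite sumr_const card_ord -mulr_natr.
  by rewrite le_eqVlt; apply/orP; left; apply/eqP; ring.
have -> : \sum_f Wc f * (Nk f k - n%:R * wc k) ^+ 2 =
    \sum_f Wc f * Nk f k ^+ 2 - 2%:R * (n%:R * wc k) * (\sum_f Wc f * Nk f k)
    + (n%:R * wc k) ^+ 2 * \sum_f Wc f.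
  rewrite !big_distrr /= -sumrB -big_split; apply: eq_bigr => f _ /=.
  move: (Wc f) (Nk f k) => a b; ring.
rewrite EN W1 mulr1.
have := wc_le1 k; have := w0 c0 rc1 k; have : 0 <= n%:R :> R by apply: ler0n.
move: EN2; move: (\sum_f Wc f * Nk f k ^+ 2) (n%:R : R) (wc k) => A nn w.
move=> *; nra.
Qed.

End Conc.

Section Part2.
Variable R : realType.

Lemma sum_indG (T : finType) (w : T -> R) (b : pred T) :
  \sum_x w x * (b x)%:R = \sum_(x | b x) w x.
Proof.
rewrite [RHS]big_mkcond /=; apply: eq_bigr => x _.
by case: (b x); rewrite ?mulr1 ?mulr0.
Qed.

Lemma exists_nat_ge (B : R) : exists N : nat, forall n, (N <= n)%N -> B <= n%:R.
Proof.
exists (Num.truncn `|B|).+1 => n hn.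
have := truncn_itv (normr_ge0 B) => /andP[_ h].
apply: le_trans (ler_norm B) _; apply: ltW; apply: lt_le_trans h _.
by rewrite ler_nat.
Qed.

Lemma part2 (r : nat) (p : R) (H : forall n : nat, {set {set 'I_n}}) :
  (0 < r)%N -> 1 / (r.+1)%:R < p -> p <= 1 / r%:R ->
  (forall n, is_simple_graph (H n)) ->
  exists mu : forall n : nat, {ffun {set {set 'I_n}} -> R},
     (forall n, M1p (H n) p (mu n)) /\
     forall eps delta : R, 0 < eps -> 0 < delta ->
       exists N : nat, forall n : nat, (N <= n)%N ->
         1 - delta <= prob (mu n) (fun S =>
           (largest_component_size S)%:R <= (1 + eps) * cc r p * n%:R).
Proof.
move=> r0 pl pu sH.
have [c1 c2 c3] := c_facts r0 pl pu.
set c := cc r p in c1 c2 c3 *.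
have rr0 : 0 <= r%:R :> R by apply: ler0n.
have c0 : 0 < c by nra.
exists (fun n => muC r c (H n)); split.
  by move=> n; apply: muC_M1p => //; apply: ltW.
move=> eps delta eps0 delta0.
have [N HN] := exists_nat_ge ((r.+1)%:R / (eps ^+ 2 * c ^+ 2 * delta)).
exists (maxn N 1) => n; rewrite geq_max => /andP[nN n1].
set nn := n%:R : R.
have nn1 : 1 <= nn by rewrite /nn ler1n.
have hB := HN n nN; rewrite -/nn in hB.
set t := eps * c * nn.
have t0 : 0 < t by rewrite /t; apply: mulr_gt0; [apply: mulr_gt0|lra].
have wcc : forall k : 'I_r.+1, wc c k <= c.
  by move=> k; rewrite /wc; case: ifP => _ //; lra.
pose good (f : {ffun 'I_n -> 'I_r.+1}) := [forall k, `|Nk R f k - nn * wc c k| < t].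
rewrite prob_push sum_indG.
apply: (@le_trans _ _ (\sum_(f | good f) Wc c f)); last first.
  apply: sum_mono; first by move=> f; exact: (W0 (ltW c0) c2 f).
  move=> f gf.
  apply: L_le; first by apply: mulr_ge0; [apply: mulr_ge0|]; lra.
  move=> k; move/forallP: gf => /(_ k); rewrite ltr_distl => /andP[_ h].
  apply: le_trans (ltW h) _.
  have := wcc k; rewrite /t => hw.
  have : nn * wc c k <= nn * c by apply: ler_wpM2l => //; lra.
  move=> h2; lra.
have hW0 : forall f : {ffun 'I_n -> 'I_r.+1}, 0 <= Wc c f by move=> f; exact: (W0 (ltW c0) c2 f).
have hW1 : \sum_(f : {ffun 'I_n -> 'I_r.+1}) Wc c f = 1 by apply: W1.
rewrite (sum_compl good hW1) lerD2l lerN2.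
pose bad (k : 'I_r.+1) (f : {ffun 'I_n -> 'I_r.+1}) := t <= `|Nk R f k - nn * wc c k|.
apply: (@le_trans _ _ (\sum_(k : 'I_r.+1) \sum_(f | bad k f) Wc c f)).
  rewrite -sum_indG.
  under [X in _ <= X]eq_bigr => k _ do rewrite -sum_indG.
  rewrite exchange_big /=; apply: ler_sum => f _.
  rewrite -big_distrr /=; apply: ler_wpM2l => //.
  case gf: (good f) => /=; first by apply: sumr_ge0 => k _; apply: ler0n.
  move/negbT: gf; rewrite negb_forall => /existsP [k hk].
  have bk : bad k f by rewrite /bad leNgt.
  rewrite (bigD1 k) //= bk lerDl; apply: sumr_ge0 => j _; apply: ler0n.
apply: (@le_trans _ _ (\sum_(k : 'I_r.+1) nn / t ^+ 2)).
  apply: ler_sum => k _.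
  apply: le_trans (cheb hW0 (fun f => Nk R f k) (nn * wc c k) t0) _.
  apply: ler_wpM2r; first by rewrite invr_ge0 exprn_ge0 // ltW.
  by apply: var_Nk; [apply: ltW|].
rewrite sumr_const card_ord -mulr_natl.
rewrite mulrA ler_pdivrMr ?exprn_gt0 // /t.
move: hB; rewrite ler_pdivrMr; last by apply: mulr_gt0 => //; apply: mulr_gt0; apply: exprn_gt0.
move=> hB.
have e : delta * (eps * c * nn) ^+ 2 = (nn * (eps ^+ 2 * c ^+ 2 * delta)) * nn by ring.
rewrite e; apply: ler_wpM2r; first lra.
exact: hB.
Qed.

End Part2.

Unset Implicit Arguments. Set Strict Implicit. Set Printing Implicit Defensive.

Theorem theorem17 (R : realType) (r : nat) (p : R)
    (H : forall n : nat, {set {set 'I_n}}) (q : nat -> R) :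
  (0 < r)%N ->
  1 / (r.+1)%:R < p -> p <= 1 / r%:R ->
  (forall n, is_simple_graph (H n)) ->
  weakly_pseudorandom H q ->
  (* q(n) >> log(n)/n *)
  (forall M : R, exists N : nat, forall n : nat, (N <= n)%N ->
      M * ln (n%:R) <= q n * n%:R) ->
  let c := (1 + Num.sqrt (((r.+1)%:R * p - 1) / r%:R)) / (r.+1)%:R in
  (* (i) *)
  (forall eps delta : R, 0 < eps -> 0 < delta ->
     exists N : nat, forall n : nat, (N <= n)%N ->
       forall mu : {ffun {set {set 'I_n}} -> R}, M1p (H n) p mu ->
         1 - delta <= prob mu (fun S =>
           (1 - eps) * c * n%:R <= (largest_component_size S)%:R)) /\
  (* (ii) *)
  (exists mu : forall n : nat, {ffun {set {set 'I_n}} -> R},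
     (forall n, M1p (H n) p (mu n)) /\
     forall eps delta : R, 0 < eps -> 0 < delta ->
       exists N : nat, forall n : nat, (N <= n)%N ->
         1 - delta <= prob (mu n) (fun S =>
           (largest_component_size S)%:R <= (1 + eps) * c * n%:R)).
Proof.
move=> r0 pl pu sH wp gr c; split.
  exact: (part1 r0 pl pu sH wp gr).
exact: (part2 r0 pl pu sH).
Qed.
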